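(* For all integers $n_1\ge n_2\ge n_3\ge 2$, $$m_0(1,n_1,n_2,n_3)=n_1+n_2+n_3-2.$$
   Context: For integers $n_1\ge\dots\ge n_r$, let $X_\ell=[n_\ell]$. An $r$-partite $r$-graph is a family $\mathcal F\subseteq X_1\times\dots\times X_r$; its vertices are the pairs $(\ell,x)$ with $x\in X_\ell$, and an edge $A=(a_1,\dots,a_r)$ contains the vertex $(\ell,x)$ iff $a_\ell=x$. Two edges $A,B$ are disjoint if $A[\ell]\ne B[\ell]$ for all $\ell$. The matching number $\nu(\mathcal F)$ is the maximum number of pairwise disjoint edges of $\mathcal F$. A transversal is a set $T$ of vertices such that every edge of $\mathcal F$ contains a vertex of $T$; $\tau(\mathcal F)$ is the minimum size of a transversal. For integers $r\ge 3$ and $n_1\ge\dots\ge n_r>s\ge 1$, $m_0(s,n_1,\dots,n_r)$ denotes the maximum of $|\mathcal F|$ over all $\mathcal F\subseteq X_1\times\dots\times X_r$ with $\nu(\mathcal F)\le s<\tau(\mathcal F)$. *)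

(* Defs.v *)
(* 3-partite 3-graphs on X_1 x X_2 x X_3 with X_l = 'I_(n_l)
   (0-based copy of [n_l]). *)
From mathcomp Require Import all_boot.
Set Implicit Arguments. Unset Strict Implicit. Unset Printing Implicit Defensive.

Section Tripartite.
Variables n1 n2 n3 : nat.

Definition edge3 := ('I_n1 * 'I_n2 * 'I_n3)%type.
(* vertices (l, x) with x in X_l, encoded as a tagged sum *)
Definition vert3 := ('I_n1 + 'I_n2 + 'I_n3)%type.

Definition coord1 (A : edge3) := A.1.1.
Definition coord2 (A : edge3) := A.1.2.
Definition coord3 (A : edge3) := A.2.

Definition contains (A : edge3) (v : vert3) : bool :=
  match v with
  | inl (inl x) => coord1 A == x
  | inl (inr x) => coord2 A == x
  | inr x => coord3 A == x
  end.

Definition edisjoint (A B : edge3) : bool :=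
  [&& coord1 A != coord1 B, coord2 A != coord2 B & coord3 A != coord3 B].

Definition is_matching (F M : {set edge3}) : bool :=
  (M \subset F) && [forall A in M, forall B in M, (A != B) ==> edisjoint A B].

Definition is_transversal (F : {set edge3}) (S : {set vert3}) : bool :=
  [forall A in F, exists v in S, contains A v].

Definition nu (F : {set edge3}) : nat :=
  \max_(M : {set edge3} | is_matching F M) #|M|.

(* transversal number (the full vertex set is always a transversal) *)
Definition tau (F : {set edge3}) : nat :=
  \big[minn/#|[set: vert3]|]_(S : {set vert3} | is_transversal F S) #|S|.

Definition m0 (s : nat) : nat :=
  \max_(F : {set edge3} | (nu F <= s) && (s < tau F)) #|F|.

End Tripartite.

(* Main.v *)
Require Import Defs.
From mathcomp Require Import all_boot zify.
Set Implicit Arguments. Unset Strict Implicit. Unset Printing Implicit Defensive.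

Lemma edge_eq n1 n2 n3 (A B : edge3 n1 n2 n3) :
  A.1.1 = B.1.1 -> A.1.2 = B.1.2 -> A.2 = B.2 -> A = B.
Proof. by case: A => [[a1 a2] a3]; case: B => [[b1 b2] b3] /= -> -> ->. Qed.

Lemma meetP n1 n2 n3 (A B : edge3 n1 n2 n3) : ~~ edisjoint A B ->
  [\/ A.1.1 = B.1.1, A.1.2 = B.1.2 | A.2 = B.2].
Proof.
rewrite /edisjoint /coord1 /coord2 /coord3.
case: eqP => [e|_]; first by move=> _; apply: Or31.
case: eqP => [e|_]; first by move=> _; apply: Or32.
by case: eqP => [e|_] // _; apply: Or33.
Qed.

Lemma edisjC n1 n2 n3 (A B : edge3 n1 n2 n3) : edisjoint A B = edisjoint B A.
Proof. by rewrite /edisjoint (eq_sym (coord1 A)) (eq_sym (coord2 A)) (eq_sym (coord3 A)). Qed.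

Lemma nu_inter n1 n2 n3 (F : {set edge3 n1 n2 n3}) : nu F <= 1 ->
  forall A B, A \in F -> B \in F -> ~~ edisjoint A B.
Proof.
move=> hnu A B AF BF; apply/negP => dAB.
have neq : A != B by apply: contraTneq dAB => ->; rewrite /edisjoint eqxx.
have hm : is_matching F [set A; B].
  rewrite /is_matching; apply/andP; split.
    by apply/subsetP => x; rewrite !inE => /orP [] /eqP ->.
  apply/forall_inP => x; rewrite !inE => /orP [] /eqP ->;
  apply/forall_inP => y; rewrite !inE => /orP [] /eqP -> ; rewrite ?eqxx //=;
  apply/implyP => _; by [|rewrite edisjC].
have h : #|[set A; B]| <= nu F := leq_bigmax_cond _ hm.
by move: (leq_trans h hnu); rewrite cards2 neq.
Qed.

Lemma bigmin_leq (I : finType) (P : pred I) (F : I -> nat) idx j :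
  P j -> \big[minn/idx]_(i | P i) F i <= F j.
Proof.
move=> Pj; rewrite -big_filter.
have : j \in [seq i <- index_enum I | P i] by rewrite mem_filter Pj mem_index_enum.
elim: [seq i <- index_enum I | P i] => //= a s IH.
rewrite inE big_cons => /orP [/eqP <- | /IH h]; first exact: geq_minl.
exact: leq_trans (geq_minr _ _) h.
Qed.

Lemma tau_cover n1 n2 n3 (F : {set edge3 n1 n2 n3}) : 1 < tau F ->
  forall v, exists2 B, B \in F & ~~ contains B v.
Proof.
move=> ht v; case: (boolP [exists B in F, ~~ contains B v]) => [/exists_inP //|hn].
have htr : Defs.is_transversal F (set1 v).
  apply/forall_inP => A AF; apply/exists_inP; exists v; first by rewrite inE.
  by apply: contraNT hn => hc; apply/exists_inP; exists A.
have := bigmin_leq (fun S : {set vert3 n1 n2 n3} => #|S|) #|[set: vert3 n1 n2 n3]| htr.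
by rewrite cards1 => h; move: (leq_ltn_trans h ht); rewrite ltnn.
Qed.

Lemma match_le1 n1 n2 n3 (F M : {set edge3 n1 n2 n3}) :
  (forall A B, A \in F -> B \in F -> ~~ edisjoint A B) -> is_matching F M -> #|M| <= 1.
Proof.
move=> I /andP [sub /forall_inP hM]; apply/card_le1_eqP => A B AM BM.
apply/eqP; rewrite eq_sym; apply: contraTT (I _ _ (subsetP sub _ AM) (subsetP sub _ BM)) => ne.
by rewrite negbK; move: (hM _ AM) => /forall_inP /(_ _ BM) /implyP; apply.
Qed.

Lemma trans_gt1 n1 n2 n3 (F : {set edge3 n1 n2 n3}) (z : 'I_n1) S :
  (forall v, exists2 B, B \in F & ~~ contains B v) -> Defs.is_transversal F S -> 1 < #|S|.
Proof.
move=> T /forall_inP hS; case: (T (inl (inl z))) => B0 B0F _.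
case/exists_inP: (hS _ B0F) => v vS _.
case: (T v) => B1 B1F nc; case/exists_inP: (hS _ B1F) => w wS cw.
apply/card_gt1P; exists v, w; split => //; by apply: contraNneq nc => ->.
Qed.

Lemma card_vert n1 n2 n3 : #|[set: vert3 n1 n2 n3]| = n1 + n2 + n3.
Proof. by rewrite cardsT /vert3 !card_sum !card_ord. Qed.

Lemma count_lemma n1 n2 n3 (F : {set edge3 n1 n2 n3}) (x0 : 'I_n1) (bb : 'I_n2) (cc : 'I_n3) :
  (forall E, E \in F -> (E.1.1 = x0 /\ (E.1.2 = bb \/ E.2 = cc)) \/ (E.1.2 = bb /\ E.2 = cc)) ->
  #|F| <= n1 + n2 + n3 - 2.
Proof.
move=> H.
pose phi (E : edge3 n1 n2 n3) : vert3 n1 n2 n3 :=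
  if E.1.1 == x0 then (if E.2 == cc then inl (inr E.1.2) else inr E.2) else inl (inl E.1.1).
have inj : {in F &, injective phi}.
  move=> [[a1 a2] a3] [[b1 b2] b3] /H HE /H HE'; rewrite /phi /=.
  case: (a1 =P x0) => e1; case: (a3 =P cc) => e3;
  case: (b1 =P x0) => e1'; case: (b3 =P cc) => e3' //= [] h;
  move: HE HE' => /= [[? [?|?]]|[? ?]] [[? [?|?]]|[? ?]]; subst; by [] || (exfalso; auto).
have hsub : phi @: F \subset ~: [set inl (inl x0); inr cc].
  apply/subsetP => v /imsetP [E EF ->]; rewrite !inE /phi.
  case: (E.1.1 =P x0) => e1; case: (E.2 =P cc) => e3 //=.
    by apply/eqP => -[]; exact: e3.
  all: try by rewrite negb_or; apply/andP; split; apply/eqP => -[] //; exact: e1.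
have := subset_leq_card hsub; rewrite (card_in_imset inj).
have := cardsC [set inl (inl x0); inr cc : vert3 n1 n2 n3].
rewrite -cardsT card_vert cards2 /= => h1 h2; lia.
Qed.

Lemma upper n1 n2 n3 (F : {set edge3 n1 n2 n3}) (z : 'I_n1) :
  6 <= n1 + n2 + n3 ->
  (forall A B, A \in F -> B \in F -> ~~ edisjoint A B) ->
  (forall v, exists2 B, B \in F & ~~ contains B v) ->
  #|F| <= n1 + n2 + n3 - 2.
Proof.
move=> h6 I T.
case: (boolP [exists E in F, exists E' in F, (E.1.2 != E'.1.2) && (E.2 != E'.2)]); last first.
  move=> Hn.
  have H2 : forall A B, A \in F -> B \in F -> A.1.2 = B.1.2 \/ A.2 = B.2.
    move=> A B AF BF; case: (eqVneq A.1.2 B.1.2) => [->|nb]; [by left|right].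
    apply/eqP; apply: contraNT Hn => nc; apply/exists_inP; exists A => //.
    by apply/exists_inP; exists B => //; rewrite nb nc.
  case: (T (inl (inl z))) => E0 E0F _.
  case: (T (inl (inr E0.1.2))) => E1 E1F /= n1E.
  have e10 : E1.2 = E0.2.
    by case: (H2 _ _ E1F E0F) => // e; move: n1E; rewrite /coord2 e eqxx.
  case: (T (inr E0.2)) => E2 E2F /= n2E.
  have e20 : E2.1.2 = E0.1.2.
    by case: (H2 _ _ E2F E0F) => // e; move: n2E; rewrite /coord3 e eqxx.
  case: (H2 _ _ E2F E1F) => e.
    by move: n1E; rewrite /coord2 -e e20 eqxx.
  by move: n2E; rewrite /coord3 e e10 eqxx.
case/exists_inP => E EF /exists_inP [E' E'F /andP [hb hc]].
have x0e : E.1.1 = E'.1.1.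
  case/meetP: (I _ _ EF E'F) => // e; [by rewrite e eqxx in hb | by rewrite e eqxx in hc].
have key : forall G, G \in F -> G.1.1 != E.1.1 ->
    (G.1.2 = E.1.2 /\ G.2 = E'.2) \/ (G.1.2 = E'.1.2 /\ G.2 = E.2).
  move=> G GF ne.
  case/meetP: (I _ _ GF EF) => e; first by rewrite e eqxx in ne.
    case/meetP: (I _ _ GF E'F) => e'; first by rewrite e' -x0e eqxx in ne.
      by rewrite -e -e' eqxx in hb.
    by left.
  case/meetP: (I _ _ GF E'F) => e'; first by rewrite e' -x0e eqxx in ne.
    by right.
  by rewrite -e -e' eqxx in hc.
case: (boolP [exists K in F, (K.1.1 != E.1.1) && (K.1.2 == E.1.2) && (K.2 == E'.2)])
  => [/exists_inP [G GF /andP [/andP [g1 /eqP g2] /eqP g3]] | nG];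
case: (boolP [exists K in F, (K.1.1 != E.1.1) && (K.1.2 == E'.1.2) && (K.2 == E.2)])
  => [/exists_inP [G' G'F /andP [/andP [g1' /eqP g2'] /eqP g3']] | nG'].
- have yy : G.1.1 = G'.1.1.
    case/meetP: (I _ _ GF G'F) => // e.
      by move: hb; rewrite -g2 -g2' e eqxx.
    by move: hc; rewrite -g3 -g3' e eqxx.
  have hsub : {subset enum F <= [:: E; E'; G; G']}.
    move=> H; rewrite mem_enum => HF; rewrite !inE.
    case: (eqVneq H.1.1 E.1.1) => h1.
      case/meetP: (I _ _ HF GF) => e.
      + by move: g1; rewrite -e h1 eqxx.
      + case/meetP: (I _ _ HF G'F) => e'.
        * by move: g1; rewrite yy -e' h1 eqxx.
        * by move: hb; rewrite -g2 -g2' -e -e' eqxx.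
        * by apply/orP; left; apply/eqP; apply: edge_eq; [exact: h1 | rewrite e g2 | rewrite e' g3'].
      + case/meetP: (I _ _ HF G'F) => e'.
        * by move: g1; rewrite yy -e' h1 eqxx.
        * by apply/orP; right; apply/orP; left; apply/eqP; apply: edge_eq; [rewrite h1 x0e | rewrite e' g2' | rewrite e g3].
        * by move: hc; rewrite -g3 -g3' -e -e' eqxx.
    case: (key _ HF h1) => [[e2 e3]|[e2 e3]].
      case/meetP: (I _ _ HF G'F) => e'.
      + by apply/orP; right; apply/orP; right; apply/orP; left; apply/eqP; apply: edge_eq; [rewrite e' yy | rewrite e2 g2 | rewrite e3 g3].
      + by move: hb; rewrite -g2' -e' e2 eqxx.
      + by move: hc; rewrite -g3' -e' e3 eqxx.
    case/meetP: (I _ _ HF GF) => e'.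
      + by apply/orP; right; apply/orP; right; apply/orP; right; apply/eqP; apply: edge_eq; [rewrite e' yy | rewrite e2 g2' | rewrite e3 g3'].
      + by move: hb; rewrite -g2 -e' e2 eqxx.
      + by move: hc; rewrite -g3 -e' e3 eqxx.
  have := uniq_leq_size (enum_uniq (mem F)) hsub.
  move=> /= h; rewrite cardE; apply: (leq_trans h); lia.
- apply: (@count_lemma _ _ _ F E.1.1 E.1.2 E'.2) => H HF.
  case: (eqVneq H.1.1 E.1.1) => h1.
    left; split => //; case/meetP: (I _ _ HF GF) => e.
    + by move: g1; rewrite -e h1 eqxx.
    + by left; rewrite e g2.
    + by right; rewrite e g3.
  case: (key _ HF h1) => [[e2 e3]|[e2 e3]]; first by right.
  by move: nG'; rewrite negb_exists_in => /forall_inP /(_ _ HF); rewrite h1 e2 e3 !eqxx.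
- apply: (@count_lemma _ _ _ F E.1.1 E'.1.2 E.2) => H HF.
  case: (eqVneq H.1.1 E.1.1) => h1.
    left; split => //; case/meetP: (I _ _ HF G'F) => e.
    + by move: g1'; rewrite -e h1 eqxx.
    + by left; rewrite e g2'.
    + by right; rewrite e g3'.
  case: (key _ HF h1) => [[e2 e3]|[e2 e3]]; last by right.
  by move: nG; rewrite negb_exists_in => /forall_inP /(_ _ HF); rewrite h1 e2 e3 !eqxx.
- case: (T (inl (inl E.1.1))) => B BF /= nB.
  case: (key _ BF nB) => [[e2 e3]|[e2 e3]].
    by move: nG; rewrite negb_exists_in => /forall_inP /(_ _ BF); rewrite nB e2 e3 !eqxx.
  by move: nG'; rewrite negb_exists_in => /forall_inP /(_ _ BF); rewrite nB e2 e3 !eqxx.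
Qed.

Definition psi n1 n2 n3 (x0 : 'I_n1) (y0 : 'I_n2) (z0 : 'I_n3) (v : vert3 n1 n2 n3)
  : edge3 n1 n2 n3 :=
  match v with
  | inl (inl x) => (x, y0, z0)
  | inl (inr y) => (x0, y, z0)
  | inr z => (x0, y0, z)
  end.

Lemma lower n1 n2 n3 (x0 x1 : 'I_n1) (y0 y1 : 'I_n2) (z0 z1 : 'I_n3) :
  x0 != x1 -> y0 != y1 -> z0 != z1 ->
  let F := psi x0 y0 z0 @: ~: [set inl (inr y0); inr z0 : vert3 n1 n2 n3] in
  [/\ #|F| = n1 + n2 + n3 - 2,
      forall A B, A \in F -> B \in F -> ~~ edisjoint A B &
      forall v, exists2 B, B \in F & ~~ contains B v].
Proof.
move=> hx hy hz F; split.
- rewrite /F card_in_imset.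
    have := cardsC [set inl (inr y0); inr z0 : vert3 n1 n2 n3].
    rewrite -cardsT card_vert cards2 /= => h; lia.
  move=> [[x|y]|z] [[x'|y']|z']; rewrite !inE /= => hu hv; case => //.
  all: try (by move=> ->).
  all: try (by move=> e1 e2; move: hu hv; rewrite -?e1 -?e2 ?eqxx ?orbT).
- move=> A B /imsetP [u _ ->] /imsetP [w _ ->].
  case: u => [[x|y]|z]; case: w => [[x'|y']|z']; by rewrite /edisjoint /= eqxx ?andbF.
- move=> [[x|y]|z].
  + case: (eqVneq x x0) => [->|nx].
      exists (psi x0 y0 z0 (inl (inl x1))); first by apply: imset_f; rewrite !inE.
      by rewrite /= /coord1 /= eq_sym.
    exists (psi x0 y0 z0 (inl (inl x0))); first by apply: imset_f; rewrite !inE.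
    by rewrite /= /coord1 /= eq_sym.
  + case: (eqVneq y y0) => [->|ny].
      exists (psi x0 y0 z0 (inl (inr y1))); first by apply: imset_f; rewrite !inE; apply/negP => /orP [/eqP [] e|/eqP //]; move: hy; rewrite e eqxx.
      by rewrite /= /coord2 /= eq_sym.
    exists (psi x0 y0 z0 (inl (inl x0))); first by apply: imset_f; rewrite !inE.
    by rewrite /= /coord2 /= eq_sym.
  + case: (eqVneq z z0) => [->|nz].
      exists (psi x0 y0 z0 (inr z1)); first by apply: imset_f; rewrite !inE; apply/negP => /orP [/eqP //|/eqP [] e]; move: hz; rewrite e eqxx.
      by rewrite /= /coord3 /= eq_sym.
    exists (psi x0 y0 z0 (inl (inl x0))); first by apply: imset_f; rewrite !inE.
    by rewrite /= /coord3 /= eq_sym.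
Qed.

Theorem theorem1p3 (n1 n2 n3 : nat) :
  n1 >= n2 -> n2 >= n3 -> n3 >= 2 ->
  m0 n1 n2 n3 1 = n1 + n2 + n3 - 2.
Proof.
move=> h12 h23 h3.
have h1 : 1 < n1 by lia.
have h2 : 1 < n2 by lia.
pose x0 : 'I_n1 := Ordinal (ltnW h1). pose x1 : 'I_n1 := Ordinal h1.
pose y0 : 'I_n2 := Ordinal (ltnW h2). pose y1 : 'I_n2 := Ordinal h2.
pose z0 : 'I_n3 := Ordinal (ltnW h3). pose z1 : 'I_n3 := Ordinal h3.
apply/eqP; rewrite eqn_leq; apply/andP; split.
  apply/bigmax_leqP => F /andP [hnu htau].
  apply: (upper x0 _ (nu_inter hnu) (tau_cover htau)); lia.
have [hc hI hT] := lower (x0 := x0) (x1 := x1) (y0 := y0) (y1 := y1) (z0 := z0) (z1 := z1)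
  isT isT isT.
rewrite -hc; apply: leq_bigmax_cond; apply/andP; split.
  by apply/bigmax_leqP => M hM; exact: match_le1 hI hM.
rewrite /tau; apply: (big_ind (fun m => 1 < m)).
- rewrite card_vert; lia.
- by move=> a b ha hb; rewrite leq_min ha hb.
- by move=> S hS; exact: (@trans_gt1 _ _ _ _ x0 S hT hS).
Qed.
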